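(* Let $(\mathbb{H}_n)_{n\geq 2}$ be a family of $3$-uniform hypergraphs $\mathbb{H}_n=\langle V_n,E_n\rangle$ without isolated vertices such that each $\mathbb{H}_n$ is not $2$-colourable and has girth greater than $3\binom{3n}{2}$. Let $\mathcal{V}$ be an ai-semiring variety that contains $S_c(abc)$. For each $n\geq 2$ let $\mathbf{w}_n$ be a non-hyperedge term for $\mathbb{H}_n$. If $\mathcal{V}$ satisfies the identity $$\mathbf{t}_{\mathbb{H}_n}\approx \mathbf{t}_{\mathbb{H}_n}+\mathbf{w}_n$$ for every $n\geq 2$, then $\mathcal{V}$ is nonfinitely based (has no finite basis for its identities).
   Context: An ai-semiring (additively idempotent semiring) is an algebra $(S,+,\cdot)$ with $(S,+)$ a commutative idempotent semigroup, $(S,\cdot)$ a semigroup, and $(x+y)z\approx xz+yz$, $x(y+z)\approx xy+xz$. Ai-semiring terms over a countable variable set $X$ are finite sums of nonempty words in $X^+$; an identity $\mathbf{u}\approx\mathbf{v}$ is a pair of terms. A variety is finitely based if it can be defined by finitely many identities. A flat semiring is an ai-semiring whose multiplicative reduct has a zero element $\infty$ and in which $x+y=\infty$ for all distinct $x,y$. $S_c(abc)$ is the flat semiring whose elements are $\infty$ together with the nonempty subwords of $abc$ in the free commutative semigroup on $\{a,b,c\}$ (i.e. $a,b,c,ab,ac,bc,abc$); the product of two such words $\mathbf u,\mathbf v$ is $\mathbf u\mathbf v$ if $\mathbf u\mathbf v$ is again such a subword, and $\infty$ otherwise; $\infty$ is a multiplicative zero; addition is $x+x=x$, $x+y=\infty$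 for $x\neq y$. A $3$-uniform hypergraph $\mathbb{H}=\langle V,E\rangle$ has a vertex set $V$ and a family $E$ of $3$-element subsets of $V$ (hyperedges). It is $2$-colourable if there is $\varphi:V\to\{0,1\}$ with $|\varphi(e)|=2$ for every $e\in E$. A cycle is a sequence $v_1,e_1,v_2,e_2,\dots,v_n,e_n$ of vertices and hyperedges without repetitions, with $v_1\in e_1\cap e_n$ and $v_{i+1}\in e_i\cap e_{i+1}$ for $1\le i<n$; its length is $n$, and the girth is the length of a shortest cycle. For a $3$-uniform hypergraph $\mathbb{H}=\langle V,E\rangle$ without isolated vertices and of girth at least $5$, the hypergraph semiring $S_{\mathbb{H}}$ is the flat semiring with pairwise distinct elements $\infty$, $\mathbf a$, $\mathbf a_v$ ($v\in V$), $\mathbf c_v$ ($v\in V$), with flat addition, $\infty$ a multiplicative zero, and commutative multiplication given by: $\mathbf a_u\mathbf a_v=\mathbf c_w$ if $\{u,v,w\}\in E$; $\mathbf a_v\mathbf c_v=\mathbf c_v\mathbf a_v=\mathbf a$; all other products equal $\infty$. (Equivalently, it is the flat semiring generated by $\{\mathbf a_v\}$ and $\infty$ subject to: commutativity; $\mathbf a_u\mathbf a_v=\infty$ unless $\{u,v\}$ lies in a hyperedge; $\mathbf a_{u_1}\mathbf a_{u_2}\mathbf a_{u_3}=\mathbf a_{v_1}\mathbf a_{v_2}\mathbf a_{v_3}=:\mathbf a$ for hyperedges $\{u_i\},\{v_i\}$; $\mathbf a_{u_1}\mathbf a_{u_2}=\mathbf a_{v_1}\mathbf a_{v_2}$ whenever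 $\{u_1,u_2,w\},\{v_1,v_2,w\}\in E$.) For such $\mathbb H$ take variables $\{x_v\mid v\in V\}$. A hyperedge product is a word $x_{v_1}x_{v_2}x_{v_3}$ with $\{v_1,v_2,v_3\}\in E$ (any order). $\mathbf{t}_{\mathbb H}$ denotes the sum of all hyperedge products. A non-hyperedge term for $\mathbb H$ is any ai-semiring term $\mathbf w$ in the variables $\{x_v\}$ whose value in $S_{\mathbb H}$ under the assignment $x_v\mapsto \mathbf a_v$ is not $\mathbf a$. *)

(* Defs.v *)
From Stdlib Require List.
From mathcomp Require Import all_boot.
Set Implicit Arguments. Unset Strict Implicit. Unset Printing Implicit Defensive.

(* Ai-semiring terms over a variable type X (absolutely free term algebra in
   +, * ; modulo the ai-semiring axioms every such term equals a finite sum of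
   nonempty words, so identities between these terms are exactly the
   ai-semiring identities). *)
Inductive term (X : Type) : Type :=
| Var of X
| Add of term X & term X
| Mul of term X & term X.
Arguments Var {X}. Arguments Add {X}. Arguments Mul {X}.

Fixpoint eval (X A : Type) (add mul : A -> A -> A) (s : X -> A) (t : term X) : A :=
  match t with
  | Var x => s x
  | Add t1 t2 => add (eval add mul s t1) (eval add mul s t2)
  | Mul t1 t2 => mul (eval add mul s t1) (eval add mul s t2)
  end.

Definition alg_sat (X A : Type) (add mul : A -> A -> A) (u v : term X) : Prop :=
  forall s : X -> A, eval add mul s u = eval add mul s v.

Record aisemiring := AiSemiring {
  car :> Type;
  sadd : car -> car -> car;
  smul : car -> car -> car;
  saddA : forall x y z, sadd x (sadd y z) = sadd (sadd x y) z;
  saddC : forall x y, sadd x y = sadd y x;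
  saddI : forall x, sadd x x = x;
  smulA : forall x y z, smul x (smul y z) = smul (smul x y) z;
  smulDl : forall x y z, smul (sadd x y) z = sadd (smul x z) (smul y z);
  smulDr : forall x y z, smul x (sadd y z) = sadd (smul x y) (smul x z)
}.

Definition sat (X : Type) (S : aisemiring) (u v : term X) : Prop :=
  alg_sat (@sadd S) (@smul S) u v.

(* A variety of ai-semirings is given by a set Sigma of identities
   (over the countable variable set nat): its members are the ai-semirings
   satisfying all of Sigma.  By Birkhoff every variety arises this way. *)
Definition identities := term nat -> term nat -> Prop.

Definition models (S : aisemiring) (Sigma : identities) : Prop :=
  forall u v, Sigma u v -> sat S u v.

Definition variety_sat (X : Type) (Sigma : identities) (u v : term X) : Prop :=
  forall S : aisemiring, models S Sigma -> sat S u v.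

Definition finitely_based (Sigma : identities) : Prop :=
  exists F : seq (term nat * term nat),
    forall S : aisemiring,
      models S Sigma <-> (forall p, List.In p F -> sat S p.1 p.2).

(* Elements are bit-triples (a?, b?, c?): the nonempty subwords of abc
   correspond to the 7 nonzero triples, and (false,false,false) is infinity. *)
Definition Sc := (bool * bool * bool)%type.
Definition Sc_inf : Sc := (false, false, false).
Definition Sc_mul (x y : Sc) : Sc :=
  let: (a1, b1, c1) := x in let: (a2, b2, c2) := y in
  if (x != Sc_inf) && (y != Sc_inf) && ~~ (a1 && a2) && ~~ (b1 && b2) && ~~ (c1 && c2)
  then (a1 || a2, b1 || b2, c1 || c2) else Sc_inf.
Definition Sc_add (x y : Sc) : Sc := if x == y then x else Sc_inf.

Definition contains_Sc (Sigma : identities) : Prop :=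
  forall u v, Sigma u v -> alg_sat Sc_add Sc_mul u v.

Record hypergraph := Hypergraph {
  hvert : finType;
  hedges : {set {set hvert}}
}.

Definition uniform3 (H : hypergraph) : Prop :=
  forall e, e \in hedges H -> #|e| = 3.

Definition no_isolated (H : hypergraph) : Prop :=
  forall v : hvert H, exists2 e, e \in hedges H & v \in e.

Definition two_colourable (H : hypergraph) : Prop :=
  exists phi : hvert H -> bool,
    forall e, e \in hedges H -> exists u, exists v, [/\ u \in e, v \in e & phi u != phi v].

(* a cycle v_1,e_1,...,v_k,e_k (0-indexed here) of length k >= 2 *)
Definition has_cycle (H : hypergraph) (k : nat) : Prop :=
  2 <= k /\
  exists (vs : nat -> hvert H) (es : nat -> {set hvert H}),
    [/\ {in gtn k &, injective vs}, {in gtn k &, injective es},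
        (forall i, i < k -> es i \in hedges H),
        (forall i, i < k -> vs i \in es i)
      & vs 0 \in es k.-1 /\ (forall i, i.+1 < k -> vs i.+1 \in es i)].

Definition girth_gt (H : hypergraph) (g : nat) : Prop :=
  forall k, k <= g -> ~ has_cycle H k.

Inductive sh_elt (V : Type) : Type :=
| SInf | SA | SAv of V | SCv of V.
Arguments SInf {V}. Arguments SA {V}.

Definition sh_eqb (V : eqType) (x y : sh_elt V) : bool :=
  match x, y with
  | SInf, SInf => true
  | SA, SA => true
  | SAv u, SAv v => u == v
  | SCv u, SCv v => u == v
  | _, _ => false
  end.

Definition sh_add (H : hypergraph) (x y : sh_elt (hvert H)) : sh_elt (hvert H) :=
  if sh_eqb x y then x else SInf.

Definition sh_mul (H : hypergraph) (x y : sh_elt (hvert H)) : sh_elt (hvert H) :=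
  match x, y with
  | SAv u, SAv v =>
      if [pick w | [set u; v; w] \in hedges H] is Some w then SCv w else SInf
  | SAv v, SCv w => if v == w then SA else SInf
  | SCv w, SAv v => if v == w then SA else SInf
  | _, _ => SInf
  end.

(* w is a non-hyperedge term: its value in S_H under x_v |-> a_v is not a *)
Definition non_hyperedge_term (H : hypergraph) (w : term (hvert H)) : Prop :=
  eval (@sh_add H) (@sh_mul H) (fun v => SAv v) w <> SA.

Definition term_sum (X : Type) (l : seq (term X)) : option (term X) :=
  match l with
  | [::] => None
  | t :: l' => Some (foldl Add t l')
  end.

(* sum of all hyperedge products x_u x_v x_w, {u,v,w} in E, in every order *)
Definition tH (H : hypergraph) : option (term (hvert H)) :=
  term_sum [seq Mul (Mul (Var t.1.1) (Var t.1.2)) (Var t.2)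
           | t <- [seq (p, w) | p <- [seq (u, v) | u <- enum (hvert H), v <- enum (hvert H)],
                                 w <- enum (hvert H)]
           & [set t.1.1; t.1.2; t.2] \in hedges H].

(* V(Sigma) satisfies t_H ~ t_H + w  (t_H must exist, i.e. E nonempty) *)
Definition sat_tH (Sigma : identities) (H : hypergraph) (w : term (hvert H)) : Prop :=
  match tH H with
  | Some t => variety_sat Sigma t (Add t w)
  | None => False
  end.

(* Main.v *)
From HB Require Import structures.
Require Import Defs.
From Stdlib Require Import Classical.
From mathcomp Require Import all_boot zify.
Set Implicit Arguments. Unset Strict Implicit. Unset Printing Implicit Defensive.

Fixpoint words (t : term nat) : seq (seq nat) :=
  match t with
  | Var x => [:: [:: x]]
  | Add t1 t2 => words t1 ++ words t2
  | Mul t1 t2 => [seq w1 ++ w2 | w1 <- words t1, w2 <- words t2]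
  end.

Lemma words_ne (t : term nat) : exists w, w \in words t.
Proof.
elim: t => [x|t1 [w1 h1] t2 _|t1 [w1 h1] t2 [w2 h2]] /=.
- by exists [:: x]; rewrite inE.
- by exists w1; rewrite mem_cat h1.
- by exists (w1 ++ w2); apply: allpairs_f.
Qed.

Lemma words_nil (t : term nat) w : w \in words t -> w <> [::].
Proof.
elim: t w => [x|t1 IH1 t2 IH2|t1 IH1 t2 IH2] w /=.
- by rewrite inE => /eqP ->.
- by rewrite mem_cat => /orP [/IH1|/IH2].
- case/allpairsP => [[w1 w2] [/= h1 h2 ->]].
  by case: w1 h1 => [/IH1 //|].
Qed.

Section Flat.
Variables (A : eqType) (inf : A) (add mul : A -> A -> A).
Hypothesis addE : forall x y, add x y = if x == y then x else inf.
Hypothesis mulA : forall x y z, mul x (mul y z) = mul (mul x y) z.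
Hypothesis infl : forall x, mul inf x = inf.
Hypothesis infr : forall x, mul x inf = inf.
Hypothesis cancl : forall x y z, mul x z = mul y z -> mul x z <> inf -> x = y.
Hypothesis cancr : forall x y z, mul z x = mul z y -> mul z x <> inf -> x = y.

Definition evalw (s : nat -> A) (w : seq nat) : A :=
  match w with
  | [::] => s 0
  | x :: r => foldl (fun a y => mul a (s y)) (s x) r
  end.

Lemma foldl_mul (s : nat -> A) a b (r : seq nat) :
  foldl (fun a y => mul a (s y)) (mul a b) r = mul a (foldl (fun a y => mul a (s y)) b r).
Proof. by elim: r b => [|z r IH] b //=; rewrite -mulA IH. Qed.

Lemma foldl_inf (s : nat -> A) (r : seq nat) : foldl (fun a y => mul a (s y)) inf r = inf.
Proof. by elim: r => [|z r IH] //=; rewrite infl. Qed.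

Lemma evalw_cat (s : nat -> A) (w1 w2 : seq nat) : w1 <> [::] -> w2 <> [::] ->
  evalw s (w1 ++ w2) = mul (evalw s w1) (evalw s w2).
Proof.
case: w1 => [//|x r1] _; case: w2 => [//|y r2] _ /=.
by rewrite foldl_cat /= foldl_mul.
Qed.

Lemma evalw_inf (s : nat -> A) (w : seq nat) x : x \in w -> s x = inf -> evalw s w = inf.
Proof.
case: w => [//|y r] /=; rewrite inE => /orP [/eqP <- -> | ]; first exact: foldl_inf.
move=> hx hs; elim: r (s y) hx => [//|z r IH] a /=; rewrite inE => /orP [/eqP <-|/IH //].
by rewrite hs infr foldl_inf.
Qed.

Lemma F1 (s : nat -> A) t X : eval add mul s t = X -> X <> inf ->
  forall w, w \in words t -> evalw s w = X.
Proof.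
elim: t X => [x|t1 IH1 t2 IH2|t1 IH1 t2 IH2] X /=.
- by move=> <- _ w; rewrite inE => /eqP ->.
- rewrite addE; case: eqP => [e|_ <- //].
  move=> hX hi w; rewrite mem_cat => /orP [|].
    by apply: IH1 => //; rewrite -hX.
  by apply: IH2 => //; rewrite -hX e.
- move=> hX hi w /allpairsP [[w1 w2] [/= h1 h2 ->]].
  have n1 : eval add mul s t1 <> inf by move=> e; apply: hi; rewrite -hX e infl.
  have n2 : eval add mul s t2 <> inf by move=> e; apply: hi; rewrite -hX e infr.
  rewrite evalw_cat; [|exact: words_nil h1|exact: words_nil h2].
  by rewrite (IH1 _ erefl n1 _ h1) (IH2 _ erefl n2 _ h2).
Qed.

Lemma F2 (s : nat -> A) t X : (forall w, w \in words t -> evalw s w = X) -> X <> inf ->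
  eval add mul s t = X.
Proof.
elim: t X => [x|t1 IH1 t2 IH2|t1 IH1 t2 IH2] X /=.
- by move=> h _; apply: (h [:: x]); rewrite inE.
- move=> h hi; rewrite addE (IH1 X) ?(IH2 X) ?eqxx // => w hw; apply: h; rewrite mem_cat hw ?orbT //.
- move=> h hi.
  have [w1 h1] := words_ne t1; have [w2 h2] := words_ne t2.
  have hw : forall a b, a \in words t1 -> b \in words t2 ->
      mul (evalw s a) (evalw s b) = X.
    move=> a b ha hb; rewrite -evalw_cat; [|exact: words_nil ha|exact: words_nil hb].
    by apply: h; apply: allpairs_f.
  have e12 := hw _ _ h1 h2.
  have n1 : evalw s w1 <> inf by move=> e; apply: hi; rewrite -e12 e infl.
  have n2 : evalw s w2 <> inf by move=> e; apply: hi; rewrite -e12 e infr.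
  rewrite (IH1 (evalw s w1)) ?(IH2 (evalw s w2)) //.
    move=> b hb; apply: (@cancr _ _ (evalw s w1)); first by rewrite hw // e12.
    by rewrite hw.
  move=> a ha; apply: (@cancl _ _ (evalw s w2)); first by rewrite hw // e12.
  by rewrite hw.
Qed.

End Flat.

Lemma sh_eqbP (V : eqType) : Equality.axiom (@sh_eqb V).
Proof.
move=> [| |u|u] [| |v|v] /=; try by constructor.
- by apply: (iffP eqP) => [->|[]].
- by apply: (iffP eqP) => [->|[]].
Qed.
HB.instance Definition _ (V : eqType) := hasDecEq.Build (sh_elt V) (@sh_eqbP V).


Section Build.
Variables (A : eqType) (inf : A) (add mul : A -> A -> A).
Hypothesis addE : forall x y, add x y = if x == y then x else inf.
Hypothesis mulA : forall x y z, mul x (mul y z) = mul (mul x y) z.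
Hypothesis infl : forall x, mul inf x = inf.
Hypothesis infr : forall x, mul x inf = inf.
Hypothesis cancl : forall x y z, mul x z = mul y z -> mul x z <> inf -> x = y.
Hypothesis cancr : forall x y z, mul z x = mul z y -> mul z x <> inf -> x = y.

Lemma fl_addA x y z : add x (add y z) = add (add x y) z.
Proof.
rewrite !addE.
case: (eqVneq y z) => [eyz|nyz]; case: (eqVneq x y) => [exy|nxy];
 repeat (case: eqP => // ?; subst); try done; try by rewrite ?eqxx in nxy nyz *.
all: try by rewrite ?eqxx in nxy *.
all: try by rewrite ?eqxx in nyz *.
all: by [].
Qed.

Lemma fl_addC x y : add x y = add y x.
Proof. by rewrite !addE eq_sym; case: eqP => // ->. Qed.

Lemma fl_addI x : add x x = x.
Proof. by rewrite addE eqxx. Qed.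

Lemma fl_mulDl x y z : mul (add x y) z = add (mul x z) (mul y z).
Proof.
rewrite !addE; case: (eqVneq x y) => [->|nxy]; first by rewrite !eqxx.
rewrite infl; case: eqP => // e.
by case: (eqVneq (mul x z) inf) => // /eqP h; case/eqP: nxy; apply: cancl e h.
Qed.

Lemma fl_mulDr x y z : mul x (add y z) = add (mul x y) (mul x z).
Proof.
rewrite !addE; case: (eqVneq y z) => [->|nxy]; first by rewrite !eqxx.
rewrite infr; case: eqP => // e.
by case: (eqVneq (mul x y) inf) => // /eqP h; case/eqP: nxy; apply: cancr e h.
Qed.

Definition flat_ais : aisemiring :=
  @AiSemiring A add mul fl_addA fl_addC fl_addI mulA fl_mulDl fl_mulDr.

End Build.

Lemma Sc_mulA (x y z : Sc) : Sc_mul x (Sc_mul y z) = Sc_mul (Sc_mul x y) z.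
Proof. by move: x y z => [[[] []] []] [[[] []] []] [[[] []] []]. Qed.
Lemma Sc_infl (x : Sc) : Sc_mul Sc_inf x = Sc_inf.
Proof. by move: x => [[[] []] []]. Qed.
Lemma Sc_infr (x : Sc) : Sc_mul x Sc_inf = Sc_inf.
Proof. by move: x => [[[] []] []]. Qed.
Lemma Sc_mulC (x y : Sc) : Sc_mul x y = Sc_mul y x.
Proof. by move: x y => [[[] []] []] [[[] []] []]. Qed.
Lemma Sc_cancl (x y z : Sc) : Sc_mul x z = Sc_mul y z -> Sc_mul x z <> Sc_inf -> x = y.
Proof. by move: x y z => [[[] []] []] [[[] []] []] [[[] []] []]. Qed.
Lemma Sc_cancr (x y z : Sc) : Sc_mul z x = Sc_mul z y -> Sc_mul z x <> Sc_inf -> x = y.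
Proof. by rewrite !(Sc_mulC z); apply: Sc_cancl. Qed.
Lemma Sc_addE (x y : Sc) : Sc_add x y = if x == y then x else Sc_inf.
Proof. by []. Qed.

Definition Sc_ais := flat_ais Sc_addE Sc_mulA Sc_infl Sc_infr Sc_cancl Sc_cancr.

Definition abc : Sc := (true, true, true).
Lemma Sc_three (x y z : Sc) : Sc_mul (Sc_mul x y) z = Sc_inf \/ Sc_mul (Sc_mul x y) z = abc.
Proof. by move: x y z => [[[] []] []] [[[] []] []] [[[] []] []]; auto. Qed.

Section Sets.
Variable T : finType.
Lemma set3C12 (a b c : T) : [set a; b; c] = [set b; a; c].
Proof. by rewrite (setUC [set a]). Qed.
Lemma set3C23 (a b c : T) : [set a; b; c] = [set a; c; b].
Proof. by rewrite setUAC. Qed.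
Lemma set3E (a b c : T) : [set a; b; c] = a |: [set b; c].
Proof. by rewrite setUA. Qed.
Lemma set3_rot (a b c : T) : [set b; c; a] = [set a; b; c].
Proof.
by apply/setP=> w; rewrite !inE; case: (w == a); case: (w == b); case: (w == c).
Qed.
Lemma card3P (a b c : T) : #|[set a; b; c]| = 3 -> [/\ a != b, a != c & b != c].
Proof.
rewrite set3E cardsU1 cards2 !inE negb_or.
by case: (a != b); case: (a != c); case: (b != c).
Qed.
Lemma card3_dist (a b c : T) : a != b -> a != c -> b != c -> #|[set a; b; c]| = 3.
Proof. by move=> hab hac hbc; rewrite set3E cardsU1 cards2 !inE negb_or hab hac hbc. Qed.
Lemma in_set3 (a b c x : T) : (x \in [set a; b; c]) = [|| x == a, x == b | x == c].
Proof. by rewrite !inE orbA. Qed.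
Lemma card3_third (e : {set T}) x y : #|e| = 3 -> x \in e -> y \in e -> x != y ->
  exists z, [/\ z \in e, z != x, z != y & e = [set x; y; z]].
Proof.
move=> he hx hy nxy.
have : 0 < #|e :\ x :\ y|.
  move: he; rewrite (cardsD1 x) hx (cardsD1 y) !inE eq_sym nxy hy.
  by case: (#|e :\ x :\ y|).
case/card_gt0P => z; rewrite !inE => /and3P [nzy nzx hz].
have h3 : #|[set x; y; z]| = 3 by rewrite card3_dist // eq_sym.
exists z; split => //; apply/eqP; rewrite eq_sym eqEcard h3 he leqnn andbT.
by apply/subsetP => w; rewrite in_set3 => /or3P [] /eqP ->.
Qed.
End Sets.

Lemma girth_lin (H : hypergraph) K : girth_gt H K -> 2 <= K ->
  forall e1 e2 a b, e1 \in hedges H -> e2 \in hedges H -> a != b ->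
  a \in e1 -> b \in e1 -> a \in e2 -> b \in e2 -> e1 = e2.
Proof.
move=> hg hK e1 e2 a b h1 h2 nab a1 b1 a2 b2.
apply/eqP; apply/negPn/negP => n12.
apply: (hg 2 hK); split => //.
exists (fun i => if i == 0 then a else b), (fun i => if i == 0 then e1 else e2).
split.
- move=> [|[|i]] [|[|j]] //= _ _; first by move/eqP: nab.
  by move=> e; move/eqP: nab; rewrite e.
- move=> [|[|i]] [|[|j]] //= _ _; first by move/eqP: n12.
  by move=> e; move/eqP: n12; rewrite e.
- by move=> [|[|i]].
- by move=> [|[|i]].
- by split => // [[|[|i]]].
Qed.

Section SH.
Variable H : hypergraph.
Local Notation V := (hvert H).
Local Notation E := (hedges H).
Hypothesis hu : uniform3 H.
Hypothesis hlin : forall e1 e2 a b, e1 \in E -> e2 \in E -> a != b ->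
  a \in e1 -> b \in e1 -> a \in e2 -> b \in e2 -> e1 = e2.

Lemma edge_dist (a b c : V) : [set a; b; c] \in E -> [/\ a != b, a != c & b != c].
Proof. by move/hu/card3P. Qed.

Lemma third_uniq (a b x y : V) : [set a; b; x] \in E -> [set a; b; y] \in E -> x = y.
Proof.
move=> hx hy; have [nab nax nbx] := edge_dist hx.
have e : [set a; b; x] = [set a; b; y].
  by apply: (hlin hx hy nab); rewrite !inE eqxx ?orbT.
have : x \in [set a; b; y] by rewrite -e !inE eqxx ?orbT.
rewrite in_set3 => /or3P [] /eqP // ex.
- by rewrite ex eqxx in nax.
- by rewrite ex eqxx in nbx.
Qed.

Lemma mulAA_edge (a b c : V) : [set a; b; c] \in E -> sh_mul (SAv a) (SAv b) = SCv c.
Proof.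
move=> hc /=; case: pickP => [w hw|h]; first by rewrite (third_uniq hw hc).
by rewrite h in hc.
Qed.

Lemma mulAA_inv (a b c : V) : sh_mul (SAv a) (SAv b) = SCv c -> [set a; b; c] \in E.
Proof. by rewrite /=; case: pickP => [w hw [<-] | //]. Qed.

Lemma mulAA_ne (a b : V) : sh_mul (SAv a) (SAv b) <> SA.
Proof. by rewrite /=; case: pickP. Qed.

Lemma mulAA_cases (a b : V) : sh_mul (SAv a) (SAv b) = SInf \/ exists c, sh_mul (SAv a) (SAv b) = SCv c.
Proof. rewrite /=; case: pickP => [w _|_]; by [right; exists w| left]. Qed.

Lemma mul3 (a b c : V) :
  sh_mul (sh_mul (SAv a) (SAv b)) (SAv c) = if [set a; b; c] \in E then SA else SInf.
Proof.
case: ifP => he; first by rewrite (mulAA_edge he) /= eqxx.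
rewrite /=; case: pickP => [w hw|//] /=; case: eqP => // ew.
by rewrite -ew hw in he || by rewrite ew hw in he.
Qed.

Lemma sh_mulC (x y : sh_elt V) : sh_mul x y = sh_mul y x.
Proof.
case: x y => [| |a|a] [| |b|b] //=.
by rewrite (eq_pick (Q := fun w => [set b; a; w] \in E)) // => w; rewrite set3C12.
Qed.

Lemma sh_mulA (x y z : sh_elt V) : sh_mul x (sh_mul y z) = sh_mul (sh_mul x y) z.
Proof.
case: x y z => [| |a|a] [| |b|b] [| |c|c] //.
all: try by rewrite mul3 sh_mulC mul3 set3_rot.
all: rewrite /=; try (case: pickP => [? ?|?]); try (case: pickP => [? ?|?]); rewrite /=;
  try case: eqP; try case: eqP; try done.
Qed.

Lemma sh_infl (x : sh_elt V) : sh_mul SInf x = SInf.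
Proof. by []. Qed.
Lemma sh_infr (x : sh_elt V) : sh_mul x SInf = SInf.
Proof. by case: x. Qed.

Lemma sh_cancl (x y z : sh_elt V) : sh_mul x z = sh_mul y z -> sh_mul x z <> SInf -> x = y.
Proof.
case: z => [| |c|c]; case: x => [| |a|a] //; case: y => [| |b|b] //.
- case: (mulAA_cases a c) => [->//|[w ew]]; rewrite ew => ew' _.
  have h1 := mulAA_inv ew; have h2 := mulAA_inv (esym ew').
  rewrite set3C12 set3C23 in h1; rewrite set3C12 set3C23 in h2; by rewrite (third_uniq h1 h2).
- by move=> /=; case: pickP => [w _|_]; case: eqP.
- by move=> /=; case: pickP => [w _|_]; case: eqP.
- by move=> /=; case: eqP => [->|]; case: eqP => [->|].
- by move=> /=; case: eqP => [->|]; case: eqP => [->|].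
Qed.

Lemma sh_cancr (x y z : sh_elt V) : sh_mul z x = sh_mul z y -> sh_mul z x <> SInf -> x = y.
Proof. by rewrite !(sh_mulC z); apply: sh_cancl. Qed.

Lemma sh_addE (x y : sh_elt V) : sh_add x y = if x == y then x else SInf.
Proof. by []. Qed.

Lemma sh2_SA (a b : sh_elt V) : sh_mul a b = SA ->
  exists p, (a = SAv p /\ b = SCv p) \/ (a = SCv p /\ b = SAv p).
Proof.
case: a => [| |p|p]; case: b => [| |q|q] //=.
- by case: pickP.
- by case: eqP => // <-; exists p; left.
- by case: eqP => // ->; exists p; right.
Qed.

Lemma sh2_SC (a b : sh_elt V) c : sh_mul a b = SCv c ->
  exists p q, [/\ a = SAv p, b = SAv q & [set p; q; c] \in E].
Proof.
case: a => [| |p|p]; case: b => [| |q|q] //=; try by case: eqP.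
move=> h; exists p, q; split => //; exact: mulAA_inv.
Qed.

Lemma sh2_nAv (a b : sh_elt V) v : sh_mul a b <> SAv v.
Proof.
case: a => [| |p|p]; case: b => [| |q|q] //=; try by case: eqP.
by case: pickP.
Qed.

Lemma sh3_cases (a b c : sh_elt V) :
  sh_mul (sh_mul a b) c = SA \/ sh_mul (sh_mul a b) c = SInf.
Proof.
case: a => [| |p|p]; case: b => [| |q|q]; try by right.
- case: (mulAA_cases p q) => [->|[w ->]]; first by right.
  by case: c => [| |r|r] /=; try (by right); case: eqP; auto.
- by rewrite /=; case: eqP => _; right.
- by rewrite /=; case: eqP => _; right.
Qed.

Lemma sh3_SA (a b c : sh_elt V) : sh_mul (sh_mul a b) c = SA ->
  exists p q r, [/\ a = SAv p, b = SAv q, c = SAv r & [set p; q; r] \in E].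
Proof.
case: a => [| |p|p]; case: b => [| |q|q] //; try by rewrite /=; case: eqP.
case: c => [| |r|r]; try by case: (mulAA_cases p q) => [->|[w ->]].
by rewrite mul3; case: ifP => // he _; exists p, q, r.
Qed.

Lemma sh4 (a b c d : sh_elt V) : sh_mul (sh_mul (sh_mul a b) c) d = SInf.
Proof. by case: (sh3_cases a b c) => ->. Qed.

Definition SH_ais := flat_ais sh_addE sh_mulA sh_infl sh_infr sh_cancl sh_cancr.

End SH.

Section Forest.
Variable H : hypergraph.
Local Notation V := (hvert H).
Local Notation E := (hedges H).
Variable K : nat.
Hypothesis hg : girth_gt H K.
Hypothesis hu : uniform3 H.
Variable P : {set V}.
Hypothesis hP : #|P| <= K.
Variable E' : {set {set V}}.
Hypothesis hE' : forall e, e \in E' -> e \in E /\ e \subset P.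

Lemma no_cyc L (vs : nat -> V) (es : nat -> {set V}) : 2 <= L ->
  {in gtn L &, injective vs} -> {in gtn L &, injective es} ->
  (forall i, i < L -> es i \in E') -> (forall i, i < L -> vs i \in es i) ->
  vs 0 \in es L.-1 -> (forall i, i.+1 < L -> vs i.+1 \in es i) -> False.
Proof.
move=> hL hv he hE hin h0 hs.
have hLP : L <= #|P|.
  have inj : injective (fun i : 'I_L => vs i).
    by move=> i j /hv e; apply/val_inj/e; rewrite inE.
  rewrite -[L]card_ord -(card_imset _ inj).
  apply: subset_leq_card; apply/subsetP => _ /imsetP [i _ ->].
  have [_ /subsetP sub] := hE' (hE i (ltn_ord i)); exact/sub/hin.
apply: (hg (leq_trans hLP hP)); split => //; exists vs, es; split => //.
by move=> i /hE /hE' [].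
Qed.


Definition hpath k (vs : nat -> V) (es : nat -> {set V}) :=
  [/\ {in gtn k.+1 &, injective vs}, {in gtn k &, injective es},
      (forall i, i < k -> es i \in E'), (forall i, i < k -> vs i \in es i)
    & (forall i, i < k -> vs i.+1 \in es i)].

Lemma card3_other (e : {set V}) x : e \in E -> exists a, a \in e /\ a != x.
Proof.
move=> /hu he; have : 0 < #|e :\ x|.
  move: he; rewrite (cardsD1 x); case: (x \in e) => /=; rewrite ?add1n ?add0n => h; lia.
by case/card_gt0P => a; rewrite !inE => /andP [? ?]; exists a.
Qed.

Lemma ext k vs es e' : 0 < k -> hpath k vs es -> e' \in E' -> e' != es k.-1 ->
  vs k \in e' -> exists vs2 es2, hpath k.+1 vs2 es2.
Proof.
move=> hk [hv he hE hin hs] he' ne' hke'.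
case: (classic (exists j, j < k /\ es j = e')) => [[j [hj ej]] | fresh].
  have hjk : j.+1 < k.
    case: (ltnP j.+1 k) => // hkj; have ejk : j = k.-1 by lia.
    by rewrite -ej ejk eqxx in ne'.
  exfalso; apply: (@no_cyc (k - j) (fun i => vs (j.+1 + i))
     (fun i => if i == (k - j).-1 then es j else es (j.+1 + i))).
  - lia.
  - move=> a b; rewrite !inE => ha hb e.
    have := hv (j.+1 + a) (j.+1 + b); rewrite !inE => /(_ ltac:(lia) ltac:(lia) e); lia.
  - move=> a b; rewrite !inE => ha hb.
    case: eqP => ea; case: eqP => eb e; first lia.
    + have := he j (j.+1 + b); rewrite !inE => /(_ ltac:(lia) ltac:(lia) e); lia.
    + have := he (j.+1 + a) j; rewrite !inE => /(_ ltac:(lia) ltac:(lia) e); lia.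
    + have := he (j.+1 + a) (j.+1 + b); rewrite !inE => /(_ ltac:(lia) ltac:(lia) e); lia.
  - move=> i hi; case: eqP => ei; [apply: hE; lia | apply: hE; lia].
  - move=> i hi; case: eqP => ei.
      have -> : j.+1 + i = k by lia.
      by rewrite ej.
    by apply: hin; lia.
  - rewrite eqxx addn0; exact: hs.
  - move=> i hi; case: eqP => ei; first lia.
    have -> : j.+1 + i.+1 = (j.+1 + i).+1 by lia.
    by apply: hs; lia.
have [a [ha nak]] := card3_other (vs k) (proj1 (hE' he')).
case: (classic (exists j, j <= k /\ vs j = a)) => [[j [hj ej]] | afresh].
  have hjk : j < k.
    case: (ltnP j k) => // hkj; have ejk : j = k by lia.
    by rewrite -ej ejk eqxx in nak.
  exfalso; apply: (@no_cyc (k - j).+1 (fun i => vs (j + i))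
     (fun i => if i == (k - j) then e' else es (j + i))).
  - lia.
  - move=> x y; rewrite !inE => hx hy e.
    have := hv (j + x) (j + y); rewrite !inE => /(_ ltac:(lia) ltac:(lia) e); lia.
  - move=> x y; rewrite !inE => hx hy.
    case: eqP => ex; case: eqP => ey e; first lia.
    + by case: fresh; exists (j + y); split; [lia | rewrite e].
    + by case: fresh; exists (j + x); split; [lia | rewrite e].
    + have := he (j + x) (j + y); rewrite !inE => /(_ ltac:(lia) ltac:(lia) e); lia.
  - move=> i hi; case: eqP => ei //; apply: hE; lia.
  - move=> i hi; case: eqP => ei.
      by have -> : j + i = k by lia.
    by apply: hin; lia.
  - by rewrite /= eqxx addn0 ej.
  - move=> i hi; case: eqP => ei; first lia.
    have -> : j + i.+1 = (j + i).+1 by lia.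
    by apply: hs; lia.
exists (fun i => if i == k.+1 then a else vs i), (fun i => if i == k then e' else es i).
split.
- move=> x y; rewrite !inE => hx hy.
  case: eqP => ex; case: eqP => ey e; first lia.
  + by case: afresh; exists y; split; [lia | rewrite e].
  + by case: afresh; exists x; split; [lia | rewrite e].
  + have := hv x y; rewrite !inE => /(_ ltac:(lia) ltac:(lia) e) //.
- move=> x y; rewrite !inE => hx hy.
  case: eqP => ex; case: eqP => ey e; first lia.
  + by case: fresh; exists y; split; [lia | rewrite e].
  + by case: fresh; exists x; split; [lia | rewrite e].
  + have := he x y; rewrite !inE => /(_ ltac:(lia) ltac:(lia) e) //.
- move=> i hi; case: eqP => ei //; apply: hE; lia.
- move=> i hi; case: eqP => ei; first lia.
  case: eqP => ei'; first by rewrite ei'.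
  by apply: hin; lia.
- move=> i hi; case: eqP => ei.
    have -> : i = k by lia.
    by rewrite eqxx.
  case: eqP => ei'; first lia.
  by apply: hs; lia.
Qed.


Lemma path_start : E' != set0 -> exists vs es, hpath 1 vs es.
Proof.
case/set0Pn => e he.
have hE := proj1 (hE' he).
have : 0 < #|e| by rewrite hu.
case/card_gt0P => x hx.
have [y [hy nyx]] := card3_other x hE.
exists (fun i => if i == 0 then x else y), (fun _ => e); split.
- move=> [|[|a]] [|[|b]] //; rewrite !inE //= => _ _ e'.
  + by rewrite e' eqxx in nyx.
  + by rewrite e' eqxx in nyx.
- by move=> [|a] [|b]; rewrite !inE.
- by [].
- by move=> [|a].
- by move=> [|a].
Qed.

Lemma replace_ext k vs es e2 z : hpath k.+1 vs es -> e2 \in E' -> e2 != es k ->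
  z \in es k -> z != vs k -> z != vs k.+1 -> z \in e2 -> exists vs2 es2, hpath k.+2 vs2 es2.
Proof.
move=> hp h2 n2 hz nzx nzy z2; case: (hp) => [hv he hE hin hs].
  case: (classic (exists j, j < k.+1 /\ vs j = z)) => [[j [hj ej]]|zfresh].
    have hjk : j < k.
      case: (ltnP j k) => // hkj; have ejk : j = k by lia.
      by rewrite -ejk ej eqxx in nzx.
    exfalso; apply: (@no_cyc (k.+1 - j) (fun i => vs (j + i)) (fun i => es (j + i))).
    - lia.
    - move=> a b; rewrite !inE => ha hb e'.
      have := hv (j + a) (j + b); rewrite !inE => /(_ ltac:(lia) ltac:(lia) e'); lia.
    - move=> a b; rewrite !inE => ha hb e'.
      have := he (j + a) (j + b); rewrite !inE => /(_ ltac:(lia) ltac:(lia) e'); lia.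
    - by move=> i hi; apply: hE; lia.
    - by move=> i hi; apply: hin; lia.
    - have -> : j + (k.+1 - j).-1 = k by lia.
      by rewrite addn0 ej.
    - move=> i hi; have -> : j + i.+1 = (j + i).+1 by lia.
      by apply: hs; lia.
  have hp' : hpath k.+1 (fun i => if i == k.+1 then z else vs i) es.
    split => //.
    - move=> a b; rewrite !inE => ha hb.
      case: eqP => ea; case: eqP => eb e'; first lia.
      + by case: zfresh; exists b; split; [lia | rewrite e'].
      + by case: zfresh; exists a; split; [lia | rewrite e'].
      + have := hv a b; rewrite !inE => /(_ ltac:(lia) ltac:(lia) e') //.
    - move=> i hi; case: eqP => ei; first lia.
      exact: hin.
    - move=> i hi; case: eqP => ei.
        by have -> : i = k by lia.
      exact: hs.
  by apply: (ext (k := k.+1) erefl hp' h2 n2) => /=; rewrite eqxx.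
Qed.

Lemma leaf : E' != set0 -> exists e x y z, [/\ e \in E', e = [set x; y; z], x != y,
  x != z & (forall e2, e2 \in E' -> e2 != e -> y \notin e2 /\ z \notin e2)].
Proof.
move=> hne; apply: NNPP => NL.
have step : forall k, 0 < k -> exists vs es, hpath k vs es.
  elim=> [//|[|k] IH] _; first exact: path_start.
  have [vs [es hp]] := IH erefl.
  case: (hp) => [hv he hE hin hs].
  pose e := es k; pose x := vs k; pose y := vs k.+1.
  have heE : e \in E' by apply: hE.
  have hx : x \in e by apply: hin.
  have hy : y \in e by apply: hs.
  have nxy : x != y.
    apply/eqP => exy; have := hv k k.+1; rewrite !inE => /(_ ltac:(lia) ltac:(lia) exy); lia.
  have [z [hz nzx nzy ez]] := card3_third (hu (proj1 (hE' heE))) hx hy nxy.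
  have : exists e2, [/\ e2 \in E', e2 != e & (y \in e2) || (z \in e2)].
    apply: NNPP => nex; apply: NL; exists e, x, y, z; split => //; first by rewrite eq_sym.
    move=> e2 h2 n2; split; apply/negP => yz; apply: nex; exists e2; split => //; by rewrite yz ?orbT.
  case=> e2 [h2 n2 /orP [y2|z2]].
    exact: (ext (k := k.+1) erefl hp h2 n2 y2).
  exact: (replace_ext hp h2 n2 hz nzx nzy z2).

have [vs [es [_ he hE _ _]]] := step (#|E'|.+1) erefl.
have inj : injective (fun i : 'I_(#|E'|.+1) => es i).
  by move=> i j /he e; apply/val_inj/e; rewrite inE.
have sub : [set es i | i : 'I_(#|E'|.+1)] \subset E'.
  by apply/subsetP => _ /imsetP [i _ ->]; apply: hE.
by have := subset_leq_card sub; rewrite card_imset // card_ord ltnn.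
Qed.

End Forest.

Inductive c3 := K0 | K1 | K2.

Lemma two_others (c : c3) : exists a b, [/\ a <> c, b <> c & a <> b].
Proof. case: c; [exists K1, K2 | exists K0, K2 | exists K0, K1]; by split. Qed.
Lemma avoid2 (c d : c3) : exists a b, [/\ a <> c, a <> d, b <> c & b <> a].
Proof.
case: c; case: d;
  first [by exists K1, K2 | by exists K2, K1 | by exists K0, K2 | by exists K2, K0 | by exists K0, K1 | by exists K1, K0].
Qed.
Lemma third (c d : c3) : c <> d -> exists b, b <> c /\ b <> d.
Proof.
case: c; case: d => // _; first [by exists K0 | by exists K1 | by exists K2].
Qed.

Definition rb (V : finType) (col : V -> c3) (E' : {set {set V}}) :=
  forall e, e \in E' -> forall a b, a \in e -> b \in e -> a != b -> col a <> col b.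

Section Ext.
Variables (V : finType) (E' : {set {set V}}) (e : {set V}) (x y z : V).
Hypotheses (he : e \in E') (hez : e = [set x; y; z]) (nxy : x != y) (nxz : x != z) (nyz : y != z).
Hypothesis hleaf : forall e2, e2 \in E' -> e2 != e -> y \notin e2 /\ z \notin e2.
Local Notation E2 := (E' :\ e).
Hypothesis IH0 : exists col, rb col E2.
Hypothesis IHneq : forall p q, p != q -> exists col, rb col E2 /\ col p <> col q.

Definition upd (col : V -> c3) cy cz v := if v == y then cy else if v == z then cz else col v.

Lemma extend_rb col cy cz : rb col E2 -> cy <> col x -> cz <> col x -> cy <> cz ->
  rb (upd col cy cz) E'.
Proof.
move=> hr h1 h2 h3 e2 h2e a b ha hb nab.
case: (eqVneq e2 e) => [ee|ne].
  have ux : upd col cy cz x = col x by rewrite /upd (negbTE nxy) (negbTE nxz).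
  have uy : upd col cy cz y = cy by rewrite /upd eqxx.
  have uz : upd col cy cz z = cz by rewrite /upd eq_sym (negbTE nyz) eqxx.
  move: ha hb nab; rewrite ee hez !inE -!orbA.
  by case/or3P => /eqP ->; case/or3P => /eqP ->; rewrite ?eqxx // => _;
    rewrite ?ux ?uy ?uz // => /esym.
have [ny nz] := hleaf h2e ne.
have hu : forall v, v \in e2 -> upd col cy cz v = col v.
  move=> v hv; rewrite /upd; case: eqP => [ev|_]; first by rewrite -ev hv in ny.
  by case: eqP => [ev|_] //; rewrite -ev hv in nz.
rewrite !hu //; apply: (hr e2) => //; by rewrite !inE ne.
Qed.

Lemma ext_keep col p q : rb col E2 -> p != y -> p != z -> q != y -> q != z ->
  exists col', [/\ rb col' E', col' p = col p & col' q = col q].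
Proof.
move=> hr py pz qy qz; have [a [b [ha hb hab]]] := two_others (col x).
exists (upd col a b); split; first exact: extend_rb.
- by rewrite /upd (negbTE py) (negbTE pz).
- by rewrite /upd (negbTE qy) (negbTE qz).
Qed.

Lemma ext0 : exists col, rb col E'.
Proof.
have [col hr] := IH0; have [a [b [ha hb hab]]] := two_others (col x).
by exists (upd col a b); apply: extend_rb.
Qed.

Lemma core_neq q : q != y -> exists col, rb col E' /\ col y <> col q.
Proof.
move=> nqy.
case: (boolP (q \in e)) => qe.
  have [col hr] := ext0; exists col; split => //.
  apply: (hr e) => //; first by rewrite hez !inE eqxx orbT.
  by rewrite eq_sym.
have qz : q != z by apply: contraNneq qe => ->; rewrite hez !inE eqxx !orbT.
have [col hr] := IH0; have [a [b [ha1 ha2 hb1 hb2]]] := avoid2 (col x) (col q).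
exists (upd col a b); split; first by apply: extend_rb => // /esym.
by rewrite /upd eqxx (negbTE nqy) (negbTE qz).
Qed.

Lemma core_eq q : q != y -> (forall e2, e2 \in E' -> ~ (y \in e2 /\ q \in e2)) ->
  exists col, rb col E' /\ col y = col q.
Proof.
move=> nqy hno.
have qe : q \notin e.
  apply/negP => qe; apply: (hno e he); split => //; by rewrite hez !inE eqxx orbT.
have qz : q != z by apply: contraNneq qe => ->; rewrite hez !inE eqxx !orbT.
have nxq : x != q by apply: contraNneq qe => <-; rewrite hez !inE eqxx.
have [col [hr hxq]] := IHneq nxq.
have [b [hb1 hb2]] := third hxq.
exists (upd col (col q) b); split.
  by apply: extend_rb => // ; [move=> /esym | move=> /esym].
by rewrite /upd eqxx (negbTE nqy) (negbTE qz).
Qed.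
End Ext.

Section Col.
Variable H : hypergraph.
Local Notation V := (hvert H).
Local Notation E := (hedges H).
Variable K : nat.
Hypothesis hg : girth_gt H K.
Hypothesis hu : uniform3 H.
Variable P : {set V}.
Hypothesis hP : #|P| <= K.

Definition colQ (E' : {set {set V}}) :=
  [/\ exists col, rb col E',
      forall p q, p != q -> exists col, rb col E' /\ col p <> col q
    & forall p q, p != q -> (forall e, e \in E' -> ~ (p \in e /\ q \in e)) ->
        exists col, rb col E' /\ col p = col q].

Lemma colQ0 : colQ set0.
Proof.
have r0 : forall col : V -> c3, rb col (set0 : {set {set V}}) by move=> col e; rewrite in_set0.
split.
- by exists (fun _ => K0).
- move=> p q npq; exists (fun v => if v == p then K0 else K1); split => //.
  by rewrite eqxx eq_sym (negbTE npq).
- by move=> p q _ _; exists (fun _ => K0).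
Qed.

Lemma colouring n : forall E' : {set {set V}}, #|E'| <= n ->
  (forall e, e \in E' -> e \in E /\ e \subset P) -> colQ E'.
Proof.
elim: n => [|n IH] E' hn hE'.
  by move: hn; rewrite leqn0 cards_eq0 => /eqP ->; apply: colQ0.
case: (eqVneq E' set0) => [->|ne]; first exact: colQ0.
have [e [x [y [z [he hez nxy nxz hleaf]]]]] := leaf hg hu hP hE' ne.
have nyz : y != z.
  have := hu (proj1 (hE' e he)); rewrite hez => /card3P [] //.
have hez' : e = [set x; z; y] by rewrite hez set3C23.
have hleaf' : forall e2, e2 \in E' -> e2 != e -> z \notin e2 /\ y \notin e2.
  by move=> e2 h1 h2; have [? ?] := hleaf e2 h1 h2.
have nzy : z != y by rewrite eq_sym.
have [IH0 IHneq IHeq] : colQ (E' :\ e).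
  apply: IH.
    by move: hn; rewrite (cardsD1 e E') he add1n ltnS.
  by move=> e2; rewrite !inE => /andP [_ /hE'].
split.
- exact: (ext0 hez nxy nxz nyz hleaf IH0).
- move=> p q npq.
  case: (eqVneq p y) => [ep|py].
    subst p; apply: (core_neq he hez nxy nxz nyz hleaf IH0 (q := q)); by rewrite eq_sym.
  case: (eqVneq p z) => [ep|pz].
    subst p; apply: (core_neq he hez' nxz nxy nzy hleaf' IH0 (q := q)); by rewrite eq_sym.
  case: (eqVneq q y) => [eq|qy].
    subst q; have [col [hr hc]] := core_neq he hez nxy nxz nyz hleaf IH0 py.
    by exists col; split => // /esym.
  case: (eqVneq q z) => [eq|qz].
    subst q; have [col [hr hc]] := core_neq he hez' nxz nxy nzy hleaf' IH0 pz.
    by exists col; split => // /esym.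
  have [col [hr hc]] := IHneq p q npq.
  have [col' [hr' h1 h2]] := ext_keep hez nxy nxz nyz hleaf hr py pz qy qz.
  by exists col'; rewrite h1 h2.
- move=> p q npq hno.
  have hno' : forall e2, e2 \in E' -> ~ (q \in e2 /\ p \in e2).
    by move=> e2 h [? ?]; apply: (hno e2 h).
  case: (eqVneq p y) => [ep|py].
    subst p; apply: (core_eq he hez nxy nxz nyz hleaf IHneq (q := q)) => //; by rewrite eq_sym.
  case: (eqVneq p z) => [ep|pz].
    subst p; apply: (core_eq he hez' nxz nxy nzy hleaf' IHneq (q := q)) => //; by rewrite eq_sym.
  case: (eqVneq q y) => [eq|qy].
    subst q; have [col [hr hc]] := core_eq he hez nxy nxz nyz hleaf IHneq py hno'.
    by exists col; split.
  case: (eqVneq q z) => [eq|qz].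
    subst q; have [col [hr hc]] := core_eq he hez' nxz nxy nzy hleaf' IHneq pz hno'.
    by exists col; split.
  have hno2 : forall e2, e2 \in E' :\ e -> ~ (p \in e2 /\ q \in e2).
    by move=> e2; rewrite !inE => /andP [_ /hno].
  have [col [hr hc]] := IHeq p q npq hno2.
  have [col' [hr' h1 h2]] := ext_keep hez nxy nxz nyz hleaf hr py pz qy qz.
  by exists col'; rewrite h1 h2.
Qed.
End Col.

Definition la : Sc := (true, false, false).
Definition lb : Sc := (false, true, false).
Definition ab : Sc := (true, true, false).
Definition letter3 (c : c3) : Sc :=
  match c with K0 => (true, false, false) | K1 => (false, true, false) | K2 => (false, false, true) end.
Definition comp3 (c : c3) : Sc :=
  match c with K0 => (false, true, true) | K1 => (true, false, true) | K2 => (true, true, false) end.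

Lemma Sc4 (a b c d : Sc) : Sc_mul (Sc_mul (Sc_mul a b) c) d = Sc_inf.
Proof. by case: (Sc_three a b c) => ->; case: d => [[[] []] []]. Qed.

Lemma Sc_long (s : nat -> Sc) x y z t r : evalw Sc_mul s [:: x, y, z, t & r] = Sc_inf.
Proof. by rewrite /= Sc4; apply: (foldl_inf Sc_infl). Qed.

Lemma evalw_eq_in (A : eqType) (mul : A -> A -> A) (s1 s2 : nat -> A) (w : seq nat) :
  w <> [::] -> {in w, s1 =1 s2} -> evalw mul s1 w = evalw mul s2 w.
Proof.
case: w => [//|x r] _ h /=; rewrite h ?inE ?eqxx //.
have : {in r, s1 =1 s2} by move=> y hy; apply: h; rewrite inE hy orbT.
elim: r (s2 x) {h} => [//|y r IH] a h /=; rewrite h ?inE ?eqxx // IH // => z hz.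
by apply: h; rewrite inE hz orbT.
Qed.

Section Key.
Variable H : hypergraph.
Local Notation V := (hvert H).
Local Notation E := (hedges H).
Variable K : nat.
Hypothesis hg : girth_gt H K.
Hypothesis hu : uniform3 H.
Hypothesis hK : 3 <= K.

Lemma hlin : forall e1 e2 a b, e1 \in E -> e2 \in E -> a != b ->
  a \in e1 -> b \in e1 -> a \in e2 -> b \in e2 -> e1 = e2.
Proof. exact: (girth_lin hg (leq_trans (isT : 2 <= 3) hK)). Qed.

Lemma link_col (c p0 q0 : V) : [set p0; q0; c] \notin E ->
  exists col : V -> bool, col p0 = col q0 /\ forall p q, [set p; q; c] \in E -> col p != col q.
Proof.
move=> hne.
pose inS r := (r == p0) || (r == q0).
pose col p := if inS p then true else
  if [pick r | [set p; r; c] \in E] is Some r then (if inS r then false else (enum_rank p < enum_rank r)%N)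
  else true.
exists col; split; first by rewrite /col /inS !eqxx ?orbT.
have partner : forall p q, [set p; q; c] \in E -> [pick r | [set p; r; c] \in E] = Some q.
  move=> p q he; case: pickP => [r hr|h]; last by rewrite h in he.
  congr Some; rewrite set3C23 in hr; rewrite set3C23 in he; exact: (third_uniq hu hlin hr he).
have notboth : forall p q, [set p; q; c] \in E -> inS p -> ~~ inS q.
  move=> p q he hp; apply/negP => hq.
  have [npq _ _] := edge_dist hu he.
  move: hp hq; rewrite /inS => /orP [] /eqP ep /orP [] /eqP eq; subst.
  - by rewrite eqxx in npq.
  - by rewrite he in hne.
  - by rewrite set3C12 he in hne.
  - by rewrite eqxx in npq.
have key1 : forall p q, [set p; q; c] \in E -> inS p -> col p != col q.
  move=> p q he hp; have nq := notboth _ _ he hp.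
  have he' : [set q; p; c] \in E by rewrite set3C12.
  by rewrite /col hp (negbTE nq) (partner _ _ he') hp.
move=> p q he.
have he' : [set q; p; c] \in E by rewrite set3C12.
case hp: (inS p); first exact: key1.
case hq: (inS q); first by rewrite eq_sym; exact: key1.
rewrite /col hp hq (partner _ _ he) (partner _ _ he') hp hq.
have [npq _ _] := edge_dist hu he.
have : enum_rank p != enum_rank q by apply: contra npq => /eqP /enum_rank_inj ->.
by case: ltngtP => // /val_inj ->; rewrite eqxx.
Qed.


Lemma set_eq3 (e : {set V}) p q r : #|e| = 3 -> p != q -> p != r -> q != r ->
  p \in e -> q \in e -> r \in e -> e = [set p; q; r].
Proof.
move=> he npq npr nqr hp hq hr; apply/eqP; rewrite eq_sym eqEcard he card3_dist // leqnn andbT.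
by apply/subsetP => w; rewrite in_set3 => /or3P [] /eqP ->.
Qed.

Lemma triangle (p q r : V) : p != q -> p != r -> q != r -> [set p; q; r] \notin E ->
  [\/ forall e, e \in E -> ~ (p \in e /\ q \in e),
      forall e, e \in E -> ~ (q \in e /\ r \in e)
    | forall e, e \in E -> ~ (p \in e /\ r \in e)].
Proof.
move=> npq npr nqr hne; apply: NNPP => hn.
have ex : forall a b, ~ (forall e, e \in E -> ~ (a \in e /\ b \in e)) ->
    exists e, [/\ e \in E, a \in e & b \in e].
  move=> a b h; apply: NNPP => h'; apply: h => e he [ha hb]; apply: h'; by exists e.
have [e1 [h1 p1 q1]] : exists e, [/\ e \in E, p \in e & q \in e].
  by apply: ex => h; apply: hn; apply: Or31.
have [e2 [h2 q2 r2]] : exists e, [/\ e \in E, q \in e & r \in e].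
  by apply: ex => h; apply: hn; apply: Or32.
have [e3 [h3 p3 r3]] : exists e, [/\ e \in E, p \in e & r \in e].
  by apply: ex => h; apply: hn; apply: Or33.
have bad : forall e, e \in E -> p \in e -> q \in e -> r \in e -> False.
  by move=> e he hp hq hr; move: hne; rewrite -(set_eq3 (hu he)) // he.
case: (eqVneq e1 e2) => [e12|n12]; first by subst; apply: (bad e2).
case: (eqVneq e2 e3) => [e23|n23]; first by subst; apply: (bad e3).
case: (eqVneq e1 e3) => [e13|n13]; first by subst; apply: (bad e3).
apply: (hg hK); split => //.
exists (fun i => nth p [:: p; q; r] i), (fun i => nth e1 [:: e1; e2; e3] i); split.
- move=> [|[|[|i]]] [|[|[|j]]] //= _ _; move/eqP; rewrite ?(negbTE npq) ?(negbTE npr) ?(negbTE nqr) //;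
    rewrite eq_sym ?(negbTE npq) ?(negbTE npr) ?(negbTE nqr) //.
- move=> [|[|[|i]]] [|[|[|j]]] //= _ _; move/eqP; rewrite ?(negbTE n12) ?(negbTE n13) ?(negbTE n23) //;
    rewrite eq_sym ?(negbTE n12) ?(negbTE n13) ?(negbTE n23) //.
- by move=> [|[|[|i]]].
- by move=> [|[|[|i]]].
- by split => // [[|[|[|i]]]].
Qed.


Local Notation shm := (@sh_mul H).
Local Notation sha := (@sh_add H).

Lemma sh_long (s : nat -> sh_elt V) x y z t r : evalw shm s [:: x, y, z, t & r] = SInf.
Proof. by rewrite /= sh4; apply: (foldl_inf (@sh_infl H)). Qed.

Lemma sep_gen (U : seq nat) (s : nat -> sh_elt V) (wu : seq (seq nat)) (w0 : seq nat)
  (g : sh_elt V -> Sc) (Y : Sc) : Y <> Sc_inf -> w0 <> [::] ->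
  (forall w, w \in wu -> [/\ w <> [::], {subset w <= U} & evalw Sc_mul (fun x => g (s x)) w = Y]) ->
  ({subset w0 <= U} -> evalw Sc_mul (fun x => g (s x)) w0 <> Y) ->
  exists s' : nat -> Sc, [/\ forall w, w \in wu -> evalw Sc_mul s' w = Y & evalw Sc_mul s' w0 <> Y].
Proof.
move=> hY hw0 hu1 hu2; exists (fun x => if x \in U then g (s x) else Sc_inf); split.
  move=> w hw; have [n sub ev] := hu1 w hw; rewrite -ev; apply: evalw_eq_in => // x hx.
  by rewrite sub.
case: (classic {subset w0 <= U}) => [sub|nsub].
  rewrite (@evalw_eq_in _ _ _ (fun x => g (s x))) //; first exact: hu2.
  by move=> x hx; rewrite sub.
have [x hx nx] : exists2 x, x \in w0 & x \notin U.
  apply: NNPP => h; apply: nsub => x hx; apply: NNPP => nx; apply: h; exists x => //.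
  by apply/negP.
by rewrite (evalw_inf Sc_infl Sc_infr hx) ?(negbTE nx) // => /esym.
Qed.

Section Cases.
Variables (U : seq nat) (s : nat -> sh_elt V) (wu : seq (seq nat)) (w0 : seq nat).
Hypothesis hwu : forall w, w \in wu -> w <> [::] /\ {subset w <= U}.
Hypothesis hw0n : w0 <> [::].

Definition sep_concl := exists s' : nat -> Sc, exists Y, [/\ Y <> Sc_inf,
  forall w, w \in wu -> evalw Sc_mul s' w = Y & evalw Sc_mul s' w0 <> Y].

Lemma case_Av v0 : (forall w, w \in wu -> evalw shm s w = SAv v0) ->
  evalw shm s w0 <> SAv v0 -> sep_concl.
Proof.
move=> hX hw0.
pose g (a : sh_elt V) := if a == SAv v0 then la else Sc_inf.
have [s' [h1 h2]] : exists s' : nat -> Sc, [/\ forall w, w \in wu -> evalw Sc_mul s' w = la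
    & evalw Sc_mul s' w0 <> la].
  apply: (sep_gen (U := U) (s := s) (g := g)) => //.
    move=> w hw; have [n sub] := hwu hw; split => //; have ev := hX w hw.
    case: w hw n sub ev => [|x [|y [|z [|t r]]]] //= hw _ _.
    - by move=> ->; rewrite /g eqxx.
    - by move/sh2_nAv.
    - by case: (sh3_cases (s x) (s y) (s z)) => ->.
    - by move=> ev; have := sh_long s x y z t r; rewrite /= ev.
  move=> _; move: hw0n hw0; case: w0 => [|x [|y [|z [|t r]]]] //= _ hw0.
  - by rewrite /g; case: eqP.
  - by rewrite /g; case: eqP => _; case: eqP.
  - by case: (Sc_three (g (s x)) (g (s y)) (g (s z))) => ->.
  - by move: (Sc_long (fun x => g (s x)) x y z t r); rewrite /= => ->.
by exists s', la; split.
Qed.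

Lemma case_Cv c : (forall w, w \in wu -> evalw shm s w = SCv c) ->
  evalw shm s w0 <> SCv c -> sep_concl.
Proof.
move=> hX hw0.
have [p0 [q0 [hne hsh]]] : exists p0 q0, [set p0; q0; c] \notin E /\
    forall x y p q, w0 = [:: x; y] -> s x = SAv p -> s y = SAv q -> p = p0 /\ q = q0.
  case: (classic (exists x y p q, [/\ w0 = [:: x; y], s x = SAv p & s y = SAv q])).
    move=> [x [y [p [q [e hx hy]]]]]; exists p, q; split.
      apply/negP => he; apply: hw0; rewrite e /= hx hy; exact: (mulAA_edge hu hlin he).
    move=> x' y' p' q' e'; rewrite e' in e; case: e => -> ->.
    by rewrite hx hy => -[->] [->].
  move=> nex; exists c, c; split.
    by apply/negP => /edge_dist => /(_ hu) []; rewrite eqxx.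
  by move=> x y p q e hx hy; case: nex; exists x, y, p, q.
have [col [hc hcol]] := link_col hne.
pose g (a : sh_elt V) := match a with
  | SCv c' => if c' == c then ab else Sc_inf
  | SAv p => if col p then la else lb
  | _ => Sc_inf end.
have [s' [h1 h2]] : exists s' : nat -> Sc, [/\ forall w, w \in wu -> evalw Sc_mul s' w = ab
    & evalw Sc_mul s' w0 <> ab].
  apply: (sep_gen (U := U) (s := s) (g := g)) => //.
    move=> w hw; have [n sub] := hwu hw; split => //; have ev := hX w hw.
    case: w hw n sub ev => [|x [|y [|z [|t r]]]] //= hw _ _.
    - by move=> ->; rewrite /g eqxx.
    - case/sh2_SC => p [q [-> -> he]]; rewrite /g.
      by move: (hcol p q he); case: (col p); case: (col q).
    - by case: (sh3_cases (s x) (s y) (s z)) => ->.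
    - by move=> ev; have := sh_long s x y z t r; rewrite /= ev.
  move=> _; move: hw0n hw0; case: w0 hsh => [|x [|y [|z [|t r]]]] //= hsh _ hw0.
  - by rewrite /g; case: (s x) hw0 => [| |p|p] //; [case: (col p) | case: eqP => [->|]].
  - have g2 : forall a b, Sc_mul (g a) (g b) = ab ->
        exists p q, [/\ a = SAv p, b = SAv q & col p != col q].
    { move=> a b; case: a => [| |p|p]; case: b => [| |q|q]; rewrite /g //=;
        try (case: eqP => //); try (case: eqP => //); try (case cp: (col p)); try (case cq: (col q)); try done.
      all: by exists p, q; rewrite ?cp ?cq. }
    move=> e; have [p [q [ex ey nc]]] := g2 _ _ e.
    have [ep eq] := hsh x y p q erefl ex ey; subst p q.
    by rewrite hc eqxx in nc.
  - by case: (Sc_three (g (s x)) (g (s y)) (g (s z))) => ->.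
  - by move: (Sc_long (fun x => g (s x)) x y z t r); rewrite /= => ->.
by exists s', ab; split.
Qed.

Lemma case_A : size U <= K -> (forall w, w \in wu -> evalw shm s w = SA) ->
  evalw shm s w0 <> SA -> sep_concl.
Proof.
move=> hUK hX hw0.
pose f x := if s x is SAv p then Some p else None.
pose P := [set p in pmap f U].
have hP : #|P| <= K.
  rewrite cardsE; apply: leq_trans (card_size _) _; rewrite size_pmap.
  exact: leq_trans (count_size _ _) hUK.
have inP : forall x p, x \in U -> s x = SAv p -> p \in P.
  by move=> x p hx hs; rewrite inE mem_pmap; apply/mapP; exists x => //; rewrite /f hs.
pose E' := [set e in E | e \subset P].
have hE' : forall e, e \in E' -> e \in E /\ e \subset P by move=> e; rewrite inE => /andP.
have [Q0 Qneq Qeq] := colouring hg hu hP (leqnn #|E'|) hE'.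
pose R1 (col : V -> c3) := forall x y p q, w0 = [:: x; y] -> p != q ->
  (s x = SAv p /\ s y = SCv q \/ s x = SCv q /\ s y = SAv p) -> col p <> col q.
pose R2 (col : V -> c3) := forall x y z p q r, w0 = [:: x; y; z] -> s x = SAv p -> s y = SAv q ->
  s z = SAv r -> ~ [/\ col p <> col q, col p <> col r & col q <> col r].
have [col [hrb hR1 hR2]] : exists col, [/\ rb col E', R1 col & R2 col].
  case: (classic (exists x y p q, [/\ w0 = [:: x; y], p != q &
      (s x = SAv p /\ s y = SCv q \/ s x = SCv q /\ s y = SAv p)])).
    move=> [x [y [p [q [e npq hs]]]]].
    have [col [hr hc]] := Qneq p q npq; exists col; split => //.
      move=> x' y' p' q'; rewrite e => -[<- <-] _ hs'.
      suff [-> ->] : p' = p /\ q' = q by [].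
      by case: hs => -[hx hy]; case: hs' => -[hx' hy']; rewrite hx' in hx; rewrite hy' in hy;
        case: hx; case: hy.
    by move=> ? ? ? ? ? ?; rewrite e => /(congr1 size).
  move=> nA.
  have hR1 : forall col, R1 col.
    by move=> col x y p q e npq hs; case: nA; exists x, y, p, q.
  case: (classic (exists x y z p q r, [/\ w0 = [:: x; y; z], s x = SAv p, s y = SAv q & s z = SAv r])).
    move=> [x [y [z [p [q [r [e hx hy hz]]]]]]].
    have hne : [set p; q; r] \notin E.
      apply/negP => he; apply: hw0; rewrite e /= hx hy hz (mul3 hu hlin) he //.
    suff [col [hr hc]] : exists col, rb col E' /\ ~ [/\ col p <> col q, col p <> col r & col q <> col r].
      exists col; split => //.
      move=> x' y' z' p' q' r'; rewrite e => -[<- <- <-].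
      by rewrite hx hy hz => -[<-] [<-] [<-].
    case: (eqVneq p q) => [epq|npq].
      by have [col hr] := Q0; exists col; split => // -[h1 _ _]; apply: h1; rewrite epq.
    case: (eqVneq p r) => [epr|npr].
      by have [col hr] := Q0; exists col; split => // -[_ h1 _]; apply: h1; rewrite epr.
    case: (eqVneq q r) => [eqr|nqr].
      by have [col hr] := Q0; exists col; split => // -[_ _ h1]; apply: h1; rewrite eqr.
    have sub : forall a b, (forall e, e \in E -> ~ (a \in e /\ b \in e)) ->
        forall e, e \in E' -> ~ (a \in e /\ b \in e).
      by move=> a b h e' /hE' [he' _]; apply: h.
    case: (triangle npq npr nqr hne) => h.
    - by have [col [hr hc]] := Qeq p q npq (sub _ _ h); exists col; split => // -[h1 _ _].
    - by have [col [hr hc]] := Qeq q r nqr (sub _ _ h); exists col; split => // -[_ _ h1].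
    - by have [col [hr hc]] := Qeq p r npr (sub _ _ h); exists col; split => // -[_ h1 _].
  move=> nB; have [col hr] := Q0; exists col; split => //.
  by move=> x y z p q r e hx hy hz; case: nB; exists x, y, z, p, q, r.
pose g (a : sh_elt V) := match a with
  | SA => abc | SAv p => letter3 (col p) | SCv p => comp3 (col p) | SInf => Sc_inf end.
have g2 : forall a b, Sc_mul (g a) (g b) = abc -> exists p q,
    (a = SAv p /\ b = SCv q \/ a = SCv q /\ b = SAv p) /\ col p = col q.
{ move=> a b; case: a => [| |p|p]; case: b => [| |q|q]; rewrite /g //=;
    try (case cp: (col p)); try (case cq: (col q)); try done.
  all: first [by exists p, q; split; [left|rewrite cp cq] | by exists q, p; split; [right|rewrite cp cq]]. }
have g3 : forall a b c, Sc_mul (Sc_mul (g a) (g b)) (g c) = abc -> exists p q r,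
    [/\ a = SAv p, b = SAv q, c = SAv r & [/\ col p <> col q, col p <> col r & col q <> col r]].
{ move=> a b c; case: a => [| |p|p]; case: b => [| |q|q]; case: c => [| |r|r]; rewrite /g //=;
    try (case cp: (col p)); try (case cq: (col q)); try (case cr: (col r)); try done.
  all: by exists p, q, r; rewrite cp cq cr. }
rewrite /R1 /R2 in hR1 hR2.
have [s' [h1 h2]] : exists s' : nat -> Sc, [/\ forall w, w \in wu -> evalw Sc_mul s' w = abc
    & evalw Sc_mul s' w0 <> abc].
  apply: (sep_gen (U := U) (s := s) (g := g)) => //.
    move=> w hw; have [n sub] := hwu hw; split => //; have ev := hX w hw.
    case: w hw n sub ev => [|x [|y [|z [|t r]]]] //= hw _ sub.
    - by move=> ->.
    - case/sh2_SA => p [] [-> ->]; rewrite /g; by case: (col p).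
    - case/(sh3_SA hu hlin) => p [q [r [hx hy hz he]]]; rewrite /g hx hy hz.
      have [npq npr nqr] := edge_dist hu he.
      have heE : [set p; q; r] \in E'.
        rewrite inE he /=; apply/subsetP => v; rewrite in_set3 => /or3P [] /eqP ->.
        + by apply: (inP x) => //; apply: sub; rewrite inE eqxx.
        + by apply: (inP y) => //; apply: sub; rewrite !inE eqxx ?orbT.
        + by apply: (inP z) => //; apply: sub; rewrite !inE eqxx ?orbT.
      have m1 : p \in [set p; q; r] by rewrite in_set3 eqxx.
      have m2 : q \in [set p; q; r] by rewrite in_set3 eqxx orbT.
      have m3 : r \in [set p; q; r] by rewrite in_set3 eqxx !orbT.
      have c1 := hrb _ heE p q m1 m2 npq.
      have c2 := hrb _ heE p r m1 m3 npr.
      have c3 := hrb _ heE q r m2 m3 nqr.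
      move: c1 c2 c3; case: (col p); case: (col q); case: (col r) => //.
    - by move=> ev; have := sh_long s x y z t r; rewrite /= ev.
  move=> _; move: hw0n hw0 hR1 hR2; case: w0 => [|x [|y [|z [|t r]]]] //= _ hw0 hR1 hR2.
  - rewrite /g; case: (s x) hw0 => [| |p|p] //; by case: (col p).
  - move=> e; have [p [q [hs hc]]] := g2 _ _ e.
    case: (eqVneq p q) => [epq|npq].
      subst q; apply: hw0; case: hs => -[-> ->] /=; by rewrite eqxx.
    exact: (hR1 x y p q erefl npq hs hc).
  - move=> e; have [p [q [r [hx hy hz hc]]]] := g3 _ _ _ e.
    exact: (hR2 x y z p q r erefl hx hy hz hc).
  - by move: (Sc_long (fun x => g (s x)) x y z t r); rewrite /= => ->.
by exists s', abc; split.
Qed.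

End Cases.

Lemma key (u v : term nat) : size (flatten (words u)) <= K -> alg_sat Sc_add Sc_mul u v ->
  forall s X, eval sha shm s u = X -> X != SInf -> eval sha shm s v = X.
Proof.
have hl := hlin.
move=> hU hsat s X hX /eqP nX.
apply: NNPP => hv.
have [w0 hw0 nw0] : exists2 w0, w0 \in words v & evalw shm s w0 <> X.
  apply: NNPP => nex; apply: hv.
  apply: (F2 (@sh_addE H) (sh_mulA hu hl) (@sh_infl H) (@sh_infr H) (sh_cancl hu hl) (sh_cancr hu hl)) => //.
  move=> w hw; apply: NNPP => ne; apply: nex; by exists w.
have hX' := F1 (@sh_addE H) (sh_mulA hu hl) (@sh_infl H) (@sh_infr H) hX nX.
have hwu : forall w, w \in words u -> w <> [::] /\ {subset w <= flatten (words u)}.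
  move=> w hw; split; first exact: words_nil hw.
  by move=> x hx; apply/flattenP; exists w.
have hw0n := words_nil hw0.
have : sep_concl (words u) w0.
  clear hv; move: hX' nX nw0; clear hX; case: X => [| |v0|c] hX' nX nw0 //.
  - exact: (case_A hwu hw0n hU hX' nw0).
  - exact: (case_Av hwu hw0n hX' nw0).
  - exact: (case_Cv hwu hw0n hX' nw0).
move=> [s' [Y [nY h1 h2]]].
have e1 : eval Sc_add Sc_mul s' u = Y :=
  F2 Sc_addE Sc_mulA Sc_infl Sc_infr Sc_cancl Sc_cancr h1 nY.
have e2 := hsat s'; rewrite e1 in e2.
exact: h2 (F1 Sc_addE Sc_mulA Sc_infl Sc_infr (esym e2) nY hw0).
Qed.

Lemma key_sat (u v : term nat) : size (flatten (words u)) <= K -> size (flatten (words v)) <= K ->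
  alg_sat Sc_add Sc_mul u v -> alg_sat sha shm u v.
Proof.
move=> hu1 hv1 hsat s.
case: (eqVneq (eval sha shm s u) SInf) => [eu|nu]; last by rewrite (key hu1 hsat erefl nu).
case: (eqVneq (eval sha shm s v) SInf) => [ev|nv]; first by rewrite eu ev.
have hsat' : alg_sat Sc_add Sc_mul v u by move=> s'; rewrite hsat.
by rewrite (key hv1 hsat' erefl nv).
Qed.

End Key.

Lemma sum_In (F : seq (term nat * term nat)) (f : term nat * term nat -> nat) p :
  List.In p F -> f p <= \sum_(q <- F) f q.
Proof.
elim: F => [//|q F IH] /= [->|/IH h]; rewrite big_cons; first exact: leq_addr.
exact: leq_trans h (leq_addl _ _).
Qed.

Lemma bin_bound n : 2 <= n -> 3 <= 3 * 'C(3 * n, 2) /\ n <= 3 * 'C(3 * n, 2).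
Proof.
move=> hn; have e : 3 * n = (3 * n).-1.+1 by lia.
have : (3 * n).-1 <= 'C(3 * n, 2) by rewrite e binS bin1 leq_addl.
move=> h; split; lia.
Qed.

Section TH.
Variable H : hypergraph.
Local Notation V := (hvert H).
Local Notation E := (hedges H).
Hypothesis hu : uniform3 H.
Hypothesis hlin : forall e1 e2 a b, e1 \in E -> e2 \in E -> a != b ->
  a \in e1 -> b \in e1 -> a \in e2 -> b \in e2 -> e1 = e2.

Lemma tH_eval : E != set0 -> exists t, tH H = Some t /\
  eval (@sh_add H) (@sh_mul H) (fun v => SAv v) t = SA.
Proof.
move=> hne.
pose l := [seq (p, w) | p <- [seq (u, v) | u <- enum V, v <- enum V], w <- enum V].
pose P (t : V * V * V) := [set t.1.1; t.1.2; t.2] \in E.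
pose F (t : V * V * V) := Mul (Mul (Var t.1.1) (Var t.1.2)) (Var t.2).
have -> : tH H = term_sum (map F (filter P l)) by [].
case/set0Pn: hne => e he.
have : 1 < #|e| by rewrite hu.
case/card_gt1P => x [y [hx hy nxy]].
have [z [hz _ _ ez]] := card3_third (hu he) hx hy nxy.
have tin : ((x, y), z) \in filter P l.
  rewrite mem_filter /P /= -ez he /=.
  by apply: allpairs_f; [apply: allpairs_f|]; rewrite mem_enum.
have hF : forall t, P t -> eval (@sh_add H) (@sh_mul H) (fun v => SAv v) (F t) = SA.
  by move=> [[a b] c] hp; rewrite /= (mul3 hu hlin); move: hp; rewrite /P /= => ->.
have hall : forall t, t \in filter P l -> P t by move=> t; rewrite mem_filter => /andP [].
case: (filter P l) tin hall => [//|t0 m] _ hall /=.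
exists (foldl Add (F t0) [seq F i | i <- m]); split => //.
have : eval (@sh_add H) (@sh_mul H) (fun v => SAv v) (F t0) = SA by apply/hF/hall; rewrite inE eqxx.
have hm : forall t, t \in m -> P t by move=> t ht; apply: hall; rewrite inE ht orbT.
elim: m (F t0) hm {hall} => [//|t1 m IH] acc hm hacc /=.
have h1 : eval (@sh_add H) (@sh_mul H) (fun v => SAv v) (F t1) = SA.
  by apply: hF; apply: hm; rewrite inE eqxx.
apply: IH; first by move=> t ht; apply: hm; rewrite inE ht orbT.
have -> : eval (@sh_add H) (@sh_mul H) (fun v => SAv v) (Add acc (F t1)) =
  sh_add (eval (@sh_add H) (@sh_mul H) (fun v => SAv v) acc)
         (eval (@sh_add H) (@sh_mul H) (fun v => SAv v) (F t1)) by [].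
by rewrite hacc h1.
Qed.
End TH.

Theorem theorem2p1 (H : nat -> hypergraph) (w : forall n, term (hvert (H n)))
  (Sigma : identities) :
  (forall n, 2 <= n ->
     [/\ uniform3 (H n), no_isolated (H n), ~ two_colourable (H n)
       & girth_gt (H n) (3 * 'C(3 * n, 2))]) ->
  contains_Sc Sigma ->
  (forall n, 2 <= n -> non_hyperedge_term (w n)) ->
  (forall n, 2 <= n -> sat_tH Sigma (w n)) ->
  ~ finitely_based Sigma.
Proof.
move=> hH hc hw hsat [F hF].
pose N := \sum_(p <- F) (size (flatten (words p.1)) + size (flatten (words p.2))).
pose n := N.+2.
have hn : 2 <= n by [].
have [hu _ hnc hg] := hH n hn.
have [hK hnK] := bin_bound hn.
have hl := hlin hg hK.
have hScm : models Sc_ais Sigma := hc.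
have hFS := proj1 (hF Sc_ais) hScm.
have hSm : models (SH_ais hu hl) Sigma.
  apply: (proj2 (hF (SH_ais hu hl))) => p hp.
  have hb := sum_In (fun p => size (flatten (words p.1)) + size (flatten (words p.2))) hp.
  apply: (key_sat hg hu hK); [| |exact: hFS].
  - apply: leq_trans hnK; apply: leq_trans (leq_trans (leq_addr _ _) hb) _; rewrite /n; lia.
  - apply: leq_trans hnK; apply: leq_trans (leq_trans (leq_addl _ _) hb) _; rewrite /n; lia.
have hne : hedges (H n) != set0.
  apply/negP => /eqP he; apply: hnc; exists (fun _ => true) => e; by rewrite he inE.
have [t [et ev]] := tH_eval hu hl hne.
have := hsat n hn; rewrite /sat_tH et => hv.
have := hv _ hSm (fun v => SAv v).
rewrite /= ev.
have hw' := hw n hn; rewrite /non_hyperedge_term in hw'.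
rewrite /sh_add /=.
by case: (eval _ _ _ (w n)) hw'.
Qed.
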